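(* Let $D$ be a connection on a vector bundle $E$ with curvature $\kappa$ and $E_0=\ker\kappa$. Then $D$ is exact if and only if the complex $\Gamma(E_0)\xrightarrow{D}\Gamma(\Lambda^1\otimes E)\xrightarrow{D^\wedge}\Gamma(\Lambda^2\otimes E)$ is exact. In particular, if $D^\wedge:\Lambda^1\otimes E\to\Lambda^2\otimes E$ is injective, then $D$ is exact. Conversely, if $D$ is exact and $\kappa:E\to\Lambda^2\otimes E$ is injective, then $D^\wedge:\Lambda^1\otimes E\to\Lambda^2\otimes E$ is injective.
   Context: $D:E\to\Lambda^1\otimes E$ is a linear connection on a smooth vector bundle; $D^\wedge$ is the exterior covariant derivative $\phi_b{}^\alpha\mapsto D_{[a}\phi_{b]}{}^\alpha$; $\kappa=D^\wedge\circ D$ is the curvature (a bundle homomorphism, assumed of constant rank). $D$ is called exact if every section $\phi$ of $\Lambda^1\otimes E$ such that $D^\wedge\phi=\kappa(\psi)$ for some section $\psi$ of $E$ is of the form $\phi=D\eta$ for some section $\eta$ of $E$. All statements are understood locally (on sufficiently small open sets). *)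

(* Defs.v *)
(* Local-coordinate model of a connection on a vector bundle: since all
   statements are local, the base is an open set U of R^n ('rV[R]_n) and
   E is trivialised as U x R^k. *)
From HB Require Import structures.
From mathcomp Require Import all_boot all_order all_algebra.
From mathcomp Require Import all_classical all_reals all_analysis.
Set Implicit Arguments. Unset Strict Implicit. Unset Printing Implicit Defensive.
Import Order.TTheory GRing.Theory Num.Theory.
Import numFieldNormedType.Exports.
Local Open Scope classical_set_scope.
Local Open Scope ring_scope.

Section Conn.
Variables (R : realType) (n k : nat).
Notation pt := 'rV[R]_n.

Definition evec (i : 'I_n) : pt := delta_mx ord0 i.
Definition partial (i : 'I_n) (f : pt -> R) : pt -> R :=
  fun x => derive f x (evec i).

Fixpoint Ck (W : set pt) (m : nat) (f : pt -> R) : Prop :=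
  match m with
  | 0 => forall x, W x -> {for x, continuous f}
  | m'.+1 => (forall x, W x -> {for x, continuous f}) /\
             (forall i x, W x -> derivable f x (evec i)) /\
             (forall i, Ck W m' (partial i f))
  end.
Definition smooth_on (W : set pt) (f : pt -> R) := forall m, Ck W m f.

(* sections of E, Lambda^1 (x) E, Lambda^2 (x) E, and connection coefficients *)
Definition secE := 'I_k -> pt -> R.
Definition sec1 := 'I_n -> 'I_k -> pt -> R.
Definition sec2 := 'I_n -> 'I_n -> 'I_k -> pt -> R.
Definition connection := 'I_n -> 'I_k -> 'I_k -> pt -> R.

Definition smoothE W (e : secE) := forall al, smooth_on W (e al).
Definition smooth1 W (p : sec1) := forall a al, smooth_on W (p a al).
Definition smooth_conn W (A : connection) := forall a al be, smooth_on W (A a al be).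

Definition Dcov (A : connection) (e : secE) : sec1 :=
  fun a al x => partial a (e al) x + \sum_(be < k) A a al be x * e be x.

Definition Dwedge (A : connection) (p : sec1) : sec2 :=
  fun a b al x => 2^-1 * (partial a (p b al) x - partial b (p a al) x
     + \sum_(be < k) (A a al be x * p b be x - A b al be x * p a be x)).

(* curvature kappa = D^wedge o D, as a bundle endomorphism E -> Lambda^2 (x) E *)
Definition curv (A : connection) (a b : 'I_n) (al be : 'I_k) (x : pt) : R :=
  2^-1 * (partial a (A b al be) x - partial b (A a al be) x
     + \sum_(ga < k) (A a al ga x * A b ga be x - A b al ga x * A a ga be x)).
Definition kappa (A : connection) (e : secE) : sec2 :=
  fun a b al x => \sum_(be < k) curv A a b al be x * e be x.

Definition kappa_mx (A : connection) (x : pt)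
  : 'M[R]_(k, #|{: 'I_n * 'I_n * 'I_k}|) :=
  \matrix_(be < k, j < #|{: 'I_n * 'I_n * 'I_k}|)
     (let t := enum_val j in curv A t.1.1 t.1.2 t.2 be x).

Definition const_rank_curv (U : set pt) (A : connection) :=
  forall x y, U x -> U y -> \rank (kappa_mx A x) = \rank (kappa_mx A y).

(* D exact (as a statement about germs of sections over U) *)
Definition exact_conn (U : set pt) (A : connection) :=
  forall W : set pt, open W -> W `<=` U ->
  forall (p : sec1) (ps : secE), smooth1 W p -> smoothE W ps ->
  (forall a b al x, W x -> Dwedge A p a b al x = kappa A ps a b al x) ->
  forall x, W x -> exists V : set pt, [/\ open V, V x, V `<=` W &
    exists e : secE, smoothE V e /\
      forall a al y, V y -> p a al y = Dcov A e a al y].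

(* exactness of Gamma(E_0) --D--> Gamma(Lambda^1 (x) E) --D^wedge--> Gamma(Lambda^2 (x) E),
   E_0 = ker kappa *)
Definition complex_exact (U : set pt) (A : connection) :=
  forall W : set pt, open W -> W `<=` U ->
  forall p : sec1, smooth1 W p ->
  (forall a b al x, W x -> Dwedge A p a b al x = 0) ->
  forall x, W x -> exists V : set pt, [/\ open V, V x, V `<=` W &
    exists e : secE, [/\ smoothE V e,
      (forall a b al y, V y -> kappa A e a b al y = 0) &
      forall a al y, V y -> p a al y = Dcov A e a al y]].

Definition Dwedge_injective (U : set pt) (A : connection) :=
  forall W : set pt, open W -> W `<=` U ->
  forall p : sec1, smooth1 W p ->
  (forall a b al x, W x -> Dwedge A p a b al x = 0) ->
  forall a al x, W x -> p a al x = 0.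

Definition kappa_injective (U : set pt) (A : connection) :=
  forall x, U x -> forall v : 'I_k -> R,
  (forall a b al, \sum_(be < k) curv A a b al be x * v be = 0) ->
  forall be, v be = 0.

End Conn.

(* Main.v *)
Require Import Defs.
From HB Require Import structures.
From mathcomp Require Import all_boot all_order all_algebra.
From mathcomp Require Import all_classical all_reals all_analysis.
From mathcomp Require Import ring lra.
Set Implicit Arguments. Unset Strict Implicit. Unset Printing Implicit Defensive.
Import Order.TTheory GRing.Theory Num.Theory.
Import numFieldNormedType.Exports.
Local Open Scope classical_set_scope.
Local Open Scope ring_scope.

Lemma alg (K : comRingType) k (c P P' : K) (dAab dAba Aa Ab E dEa dEb : 'I_k -> K)
  (Ab2 Aa2 : 'I_k -> 'I_k -> K) : P = P' ->
  c * ((P + \sum_(be < k) (dAab be * E be + Ab be * dEa be))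
     - (P' + \sum_(be < k) (dAba be * E be + Aa be * dEb be))
     + \sum_(be < k) (Aa be * (dEb be + \sum_(ga < k) Ab2 be ga * E ga)
                   - Ab be * (dEa be + \sum_(ga < k) Aa2 be ga * E ga)))
  = \sum_(be < k) c * (dAab be - dAba be
        + \sum_(ga < k) (Aa ga * Ab2 ga be - Ab ga * Aa2 ga be)) * E be.
Proof.
move=> <-.
have T1 : \sum_(be < k) Aa be * \sum_(ga < k) Ab2 be ga * E ga
        = \sum_(be < k) (\sum_(ga < k) Aa ga * Ab2 ga be) * E be.
  under eq_bigr do rewrite mulr_sumr.
  under [RHS]eq_bigr do rewrite mulr_suml.
  rewrite exchange_big /=; apply: eq_bigr => be _; apply: eq_bigr => ga _.
  by rewrite mulrA.
have T2 : \sum_(be < k) Ab be * \sum_(ga < k) Aa2 be ga * E ga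
        = \sum_(be < k) (\sum_(ga < k) Ab ga * Aa2 ga be) * E be.
  under eq_bigr do rewrite mulr_sumr.
  under [RHS]eq_bigr do rewrite mulr_suml.
  rewrite exchange_big /=; apply: eq_bigr => be _; apply: eq_bigr => ga _.
  by rewrite mulrA.
have e3 : \sum_(be < k) (Aa be * (dEb be + \sum_(ga < k) Ab2 be ga * E ga)
                   - Ab be * (dEa be + \sum_(ga < k) Aa2 be ga * E ga))
   = (\sum_(be < k) Aa be * dEb be + \sum_(be < k) Aa be * \sum_(ga < k) Ab2 be ga * E ga)
   - (\sum_(be < k) Ab be * dEa be + \sum_(be < k) Ab be * \sum_(ga < k) Aa2 be ga * E ga).
  by rewrite -!big_split -sumrB /=; apply: eq_bigr => ? _; rewrite !mulrDr.
have eR : \sum_(be < k) c * (dAab be - dAba be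
        + \sum_(ga < k) (Aa ga * Ab2 ga be - Ab ga * Aa2 ga be)) * E be
   = c * (\sum_(be < k) dAab be * E be - \sum_(be < k) dAba be * E be
      + (\sum_(be < k) (\sum_(ga < k) Aa ga * Ab2 ga be) * E be
       - \sum_(be < k) (\sum_(ga < k) Ab ga * Aa2 ga be) * E be)).
  rewrite -!sumrB -big_split mulr_sumr /=; apply: eq_bigr => be _.
  rewrite sumrB; ring.
rewrite e3 eR -T1 -T2 !big_split /=; ring.
Qed.

Section S.
Variables (R : realType) (n : nat).
Notation pt := 'rV[R]_n.

Lemma open_near (W : set pt) x : open W -> W x -> \forall y \near x, W y.
Proof. by move=> oW Wx; apply: open_nbhs_nbhs. Qed.

Lemma cont_ext (f g : pt -> R) x : (\forall y \near x, f y = g y) ->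
  {for x, continuous f} -> {for x, continuous g}.
Proof.
move=> fg cf. 
have fgx : f x = g x by apply: (nbhs_singleton fg).
rewrite /prop_for /continuous_at -fgx.
apply: cvg_trans cf; apply: (@near_eq_cvg _ _ (nbhs x)).
by apply: filterS fg => y ->.
Unshelve. all: by end_near. Qed.

Lemma Ck_ext (W : set pt) m (f g : pt -> R) : open W ->
  (forall x, W x -> f x = g x) -> Ck W m f -> Ck W m g.
Proof.
move=> oW; elim: m f g => [|m IH] f g fg /=.
  move=> cf x Wx; apply: cont_ext (cf x Wx).
  by near=> y; apply: fg; near: y; apply: open_near.
move=> [cf [df pf]]; split; [|split].
- move=> x Wx; apply: cont_ext (cf x Wx).
  by near=> y; apply: fg; near: y; apply: open_near.
- move=> i x Wx; apply: near_eq_derivable (df i x Wx).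
  by near=> y; apply: fg; near: y; apply: open_near.
- move=> i; apply: IH (pf i) => x Wx; rewrite /partial.
  apply: near_eq_derive.
  by near=> y; apply: fg; near: y; apply: open_near.
Unshelve. all: by end_near. Qed.


Lemma Ck_down (W : set pt) m f : Ck W m.+1 f -> Ck W m f.
Proof.
elim: m f => [|m IH] f /=; first by case.
by move=> [cf [df pf]]; split => //; split => // i; apply: IH.
Qed.

Lemma Ck_cst (W : set pt) m (c : R) : Ck W m (fun _ => c).
Proof.
elim: m c => [|m IH] c /=; first by move=> x _; exact: cst_continuous.
split; first by move=> x _; exact: cst_continuous.
split; first by move=> i x _; apply: derivable_cst.
move=> i; have -> : partial i (fun _ : pt => c) = (fun _ => 0).
  by apply/funext => y; rewrite /partial derive_cst.
exact: IH.
Qed.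

Lemma Ck_add (W : set pt) m f g : open W -> Ck W m f -> Ck W m g ->
  Ck W m (fun x => f x + g x).
Proof.
move=> oW; elim: m f g => [|m IH] f g /=.
  by move=> cf cg x Wx; apply: continuousD; [exact: cf|exact: cg].
move=> [cf [df pf]] [cg [dg pg]]; split; [|split].
- by move=> x Wx; apply: continuousD; [exact: cf|exact: cg].
- by move=> i x Wx; apply: derivableD; [exact: df|exact: dg].
- move=> i; apply: Ck_ext oW _ (IH _ _ (pf i) (pg i)) => x Wx.
  by rewrite /partial deriveD //; [exact: df|exact: dg].
Qed.

Lemma Ck_mul (W : set pt) m f g : open W -> Ck W m f -> Ck W m g ->
  Ck W m (fun x => f x * g x).
Proof.
move=> oW; elim: m f g => [|m IH] f g /=.
  by move=> cf cg x Wx; apply: continuousM; [exact: cf|exact: cg].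
move=> Cf Cg; have Cf' := Ck_down Cf; have Cg' := Ck_down Cg.
move: Cf Cg => [cf [df pf]] [cg [dg pg]]; split; [|split].
- by move=> x Wx; apply: continuousM; [exact: cf|exact: cg].
- by move=> i x Wx; apply: derivableM; [exact: df|exact: dg].
- move=> i; apply: Ck_ext oW _ (Ck_add oW (IH _ _ Cf' (pg i)) (IH _ _ Cg' (pf i))).
  move=> x Wx.
  by rewrite /partial deriveM //; [exact: df|exact: dg].
Qed.

Lemma Ck_sum (W : set pt) m k (F : 'I_k -> pt -> R) : open W ->
  (forall i, Ck W m (F i)) -> Ck W m (fun x => \sum_(i < k) F i x).
Proof.
move=> oW; elim: k F => [|k IH] F CF.
  by apply: Ck_ext oW _ (Ck_cst W m 0) => x _; rewrite big_ord0.
apply: Ck_ext oW _ (Ck_add oW (IH (fun i => F (widen_ord (leqnSn k) i)) _) (CF ord_max)).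
  by move=> x _; rewrite big_ord_recr /=.
by move=> i; apply: CF.
Qed.

Lemma Ck_partial (W : set pt) m f i : Ck W m.+1 f -> Ck W m (partial i f).
Proof. by move=> /= [_ [_ pf]]. Qed.


Lemma dir1 (f : pt -> R) (y u : pt) (s : R) :
  derivable f (y + s *: u) u ->
  is_derive s 1 (fun t => f (y + t *: u)) (derive f (y + s *: u) u).
Proof.
have E : (fun h : R => h^-1 *: (((fun t => f (y + t *: u)) \o shift s) (h *: 1)
             - f (y + s *: u))) =
         (fun h => h^-1 *: ((f \o shift (y + s *: u)) (h *: u) - f (y + s *: u))).
  apply/funext => h /=; congr (_ *: (f _ - _)).
  rewrite /shift /= (_ : h%:A = h); last by rewrite -[RHS]mulr1.
  by rewrite scalerDl addrCA.
move=> df; apply: DeriveDef.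
  by rewrite /derivable E.
by rewrite /derive E.
Qed.

Lemma dir_shift (f : pt -> R) (z w u : pt) :
  derivable f (z + w) u ->
  derivable (fun y => f (y + w)) z u /\ derive (fun y => f (y + w)) z u = derive f (z + w) u.
Proof.
have E : (fun h : R => h^-1 *: (((fun y => f (y + w)) \o shift z) (h *: u)
             - f (z + w))) =
         (fun h => h^-1 *: ((f \o shift (z + w)) (h *: u) - f (z + w))).
  apply/funext => h /=; congr (_ *: (f _ - _)).
  by rewrite /shift /= addrA.
move=> df; split; first by rewrite /derivable E.
by rewrite /derive E.
Qed.


Lemma mvt_dir (g : pt -> R) (y u : pt) (s : R) : 0 < s ->
  (forall t, 0 <= t <= s -> derivable g (y + t *: u) u) ->
  exists2 c, 0 < c < s & g (y + s *: u) - g y = derive g (y + c *: u) u * s.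
Proof.
move=> s0 dg.
have := @MVT R (fun t => g (y + t *: u)) (fun t => derive g (y + t *: u) u) 0 s s0.
case.
- move=> t; rewrite in_itv /= => /andP[t0 ts]; apply: dir1; apply: dg.
  by rewrite !ltW.
- apply: continuous_in_subspaceT => t; rewrite inE /= in_itv /= => /andP[t0 ts].
  have /dir1 [dd _] : derivable g (y + t *: u) u by apply: dg; rewrite t0 ts.
  exact/differentiable_continuous/derivable1_diffP.
move=> c; rewrite in_itv /= => /andP[c0 cs]; rewrite scale0r addr0 subr0 => ->.
by exists c => //; rewrite c0 cs.
Qed.


Lemma mixed (f : pt -> R) (W : set pt) x i j s t : 0 < s -> 0 < t -> Ck W 2 f ->
  (forall a b, 0 <= a <= s -> 0 <= b <= t ->
     W (x + a *: evec R i + b *: evec R j)) ->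
  exists c d, [/\ 0 < c < s, 0 < d < t &
   f (x + s *: evec R i + t *: evec R j) - f (x + s *: evec R i)
     - f (x + t *: evec R j) + f x
     = s * t * partial j (partial i f) (x + c *: evec R i + d *: evec R j)].
Proof.
set u := evec R i; set v := evec R j.
move=> s0 t0 [cf [df pf]] box.
have [cG [dG _]] := pf i.
have Wx0 a : 0 <= a <= s -> W (x + a *: u).
  move=> ha; have := box a 0 ha; rewrite lexx ltW // scale0r addr0; exact.
have dsh a : 0 <= a <= s -> derivable (fun z => f (z + t *: v)) (x + a *: u) u /\
   derive (fun z => f (z + t *: v)) (x + a *: u) u = partial i f (x + a *: u + t *: v).
  move=> ha; apply: dir_shift; apply: df; apply: box => //.
  by rewrite lexx ltW.
have [c /andP[c0 cs] Ec] := @mvt_dir ((fun z => f (z + t *: v)) - f) x u s s0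
   (fun a ha => derivableB (dsh a ha).1 (df i _ (Wx0 a ha))).
have hc : 0 <= c <= s by rewrite !ltW.
rewrite deriveB ?(dsh c hc).2 in Ec; last 2 first.
- exact: (dsh c hc).1.
- exact: df i _ (Wx0 c hc).
have [d /andP[d0 dt] Ed] := @mvt_dir (partial i f) (x + c *: u) v t t0
   (fun b hb => dG j _ (box c b hc hb)).
exists c, d; split; [by rewrite c0 cs|by rewrite d0 dt|].
have Ec' : f (x + s *: u + t *: v) - f (x + s *: u) - (f (x + t *: v) - f x)
   = (partial i f (x + c *: u + t *: v) - partial i f (x + c *: u)) * s := Ec.
have -> : partial j (partial i f) (x + c *: u + d *: v)
   = derive (partial i f) (x + c *: u + d *: v) v by [].
transitivity (f (x + s *: u + t *: v) - f (x + s *: u) - (f (x + t *: v) - f x)).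
  by ring.
by rewrite Ec' Ed; ring.
Qed.


Lemma norm_evec (i : 'I_n) : `|evec R i| <= 1.
Proof.
rewrite -[`|_|]/(mx_norm _) mx_normrE; apply: bigmax_le => // -[a b] _ /=.
rewrite /evec mxE; case: (_ && _) => /=; by rewrite ?normr0 ?normr1.
Qed.

Lemma norm_box (x : pt) a b i j : 0 <= a -> 0 <= b ->
  `|x - (x + a *: evec R i + b *: evec R j)| <= a + b.
Proof.
move=> a0 b0; rewrite -addrA opprD addrA subrr sub0r normrN.
apply: (le_trans (ler_normD _ _)); rewrite !normrZ.
apply: lerD.
  by rewrite ger0_norm // -[leRHS]mulr1 ler_wpM2l // norm_evec.
by rewrite ger0_norm // -[leRHS]mulr1 ler_wpM2l // norm_evec.
Qed.


Lemma ltW_andP (a b : R) : 0 < a -> a < b -> 0 <= a <= b.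
Proof. by move=> ? ?; rewrite !ltW. Qed.

Lemma clairaut (f : pt -> R) (W : set pt) x i j : open W -> Ck W 2 f -> W x ->
  partial j (partial i f) x = partial i (partial j f) x.
Proof.
move=> oW Cf Wx.
have Cf' := Cf; move: Cf' => [_ [_ pf]].
have [_ [_ qi]] := pf i; have [_ [_ qj]] := pf j.
have cF := qi j x Wx; have cG := qj i x Wx.
set F := partial j (partial i f) in cF *; set G := partial i (partial j f) in cG *.
suff H : forall e, 0 < e -> `|F x - G x| < e + e.
  have [//|hz] := eqVneq (F x) (G x).
  have hz' : 0 < `|F x - G x| / 3 by rewrite divr_gt0 // normr_gt0 subr_eq0.
  have := H _ hz'; move: hz'; set z := `|F x - G x|; lra.
move=> e e0.
have h1 : \forall y \near x, W y := open_near oW Wx.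
have h2 := proj1 (cvgrPdist_lt _ _) cF e e0.
have h3 := proj1 (cvgrPdist_lt _ _) cG e e0.
have [del del0 Hb] : exists2 del : R, 0 < del & forall y, `|x - y| < del ->
   [/\ W y, `|F x - F y| < e & `|G x - G y| < e].
  have P : nbhs x (fun y => [/\ W y, `|F x - F y| < e & `|G x - G y| < e]).
    have h1' : nbhs x W := h1.
    have h2' : nbhs x (fun y => `|F x - F y| < e) := h2 (nbhs_filter x).
    have h3' : nbhs x (fun y => `|G x - G y| < e) := h3 (nbhs_filter x).
    by move: h1' h2' h3'; apply: (@filterS3 _ (nbhs x) (nbhs_filter x)) => y ? ? ?; split.
  move/nbhs_ballP: P => [del /= del0 Hb]; exists del => // y xy.
  by apply: Hb; rewrite -ball_normE /ball_ /=.
have inb a b k l : 0 <= a <= del / 3 -> 0 <= b <= del / 3 ->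
   [/\ W (x + a *: evec R k + b *: evec R l),
       `|F x - F (x + a *: evec R k + b *: evec R l)| < e &
       `|G x - G (x + a *: evec R k + b *: evec R l)| < e].
  move=> /andP[a0 ad] /andP[b0 bd]; apply: Hb.
  apply: (le_lt_trans (norm_box _ _ _ a0 b0)); lra.
have s0 : 0 < del / 3 by rewrite divr_gt0.
have inW a b k l : 0 <= a <= del / 3 -> 0 <= b <= del / 3 ->
   W (x + a *: evec R k + b *: evec R l).
  by move=> ha hb; case: (inb a b k l ha hb).
have [c [d [hc hd E1]]] := @mixed f W x i j _ _ s0 s0 Cf
   (fun a b ha hb => inW a b i j ha hb).
have [c' [d' [hc' hd' E2]]] := @mixed f W x j i _ _ s0 s0 Cf
   (fun a b ha hb => inW a b j i ha hb).
move: hc hd hc' hd' => /andP[c0 cs] /andP[d0 ds] /andP[c0' cs'] /andP[d0' ds'].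
have EFG : F (x + c *: evec R i + d *: evec R j) = G (x + c' *: evec R j + d' *: evec R i).
  have ne : del / 3 * (del / 3) != 0 by rewrite mulf_neq0 // gt_eqF.
  apply: (mulfI ne).
  rewrite -[LHS]E1 -[RHS]E2 (addrAC x (del / 3 *: evec R j)).
  by rewrite [X in X + _ = _]addrAC.
have [_ h1F _] := inb c d i j (ltW_andP c0 cs) (ltW_andP d0 ds).
have [_ _ h1G] := inb c' d' j i (ltW_andP c0' cs') (ltW_andP d0' ds').
rewrite EFG in h1F; rewrite distrC in h1G.
apply: le_lt_trans (ltrD h1F h1G).
set g' := G (x + c' *: evec R j + d' *: evec R i).
apply: le_trans (ler_normD _ _).
by rewrite addrA subrK.
Qed.




Lemma partial_Dcov k (A : connection R n k) (e : secE R n k) a b al x :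
  (forall be, derivable (A b al be) x (evec R a)) ->
  (forall be, derivable (e be) x (evec R a)) ->
  derivable (partial b (e al)) x (evec R a) ->
  partial a (Dcov A e b al) x = partial a (partial b (e al)) x
    + \sum_(be < k) (partial a (A b al be) x * e be x
                     + A b al be x * partial a (e be) x).
Proof.
move=> dA de dp.
have -> : Dcov A e b al = partial b (e al) + \sum_(be < k) (A b al be * e be).
  by apply/funext => y; rewrite /Dcov fct_sumE.
have dM be := derivableM (dA be) (de be).
rewrite /partial deriveD //; last by apply: derivable_sum.
rewrite derive_sum //; congr (_ + _); apply: eq_bigr => be _.
rewrite (deriveM (dA be) (de be)) addrC; congr (_ + _); first exact: mulrC.
Qed.

Lemma DwD k (A : connection R n k) (e : secE R n k) (W : set pt) x a b al :
  open W -> W x -> (forall a al be, Ck W 1 (A a al be)) ->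
  (forall al, Ck W 2 (e al)) ->
  Dwedge A (Dcov A e) a b al x = kappa A e a b al x.
Proof.
move=> oW Wx CA Ce.
have dA a' al' be a'' : derivable (A a' al' be) x (evec R a'').
  by have [_ [d _]] := CA a' al' be; apply: d.
have de al' a'' : derivable (e al') x (evec R a'').
  by have [_ [d _]] := Ce al'; apply: d.
have dp b' al' a'' : derivable (partial b' (e al')) x (evec R a'').
  by have [_ [_ pf]] := Ce al'; have [_ [d _]] := pf b'; apply: d.
rewrite /Dwedge /kappa /curv (partial_Dcov (dA b al ^~ a) (de ^~ a) (dp b al a)).
rewrite (partial_Dcov (dA a al ^~ b) (de ^~ b) (dp a al b)).
apply: alg.
exact: (clairaut b a oW (Ce al) Wx).
Qed.
End S.

Section S2.
Variables (R : realType) (n k : nat).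
Notation pt := 'rV[R]_n.
Implicit Types (A : connection R n k) (W U V : set pt).

Lemma Ck_sub W U m (f : pt -> R) : W `<=` U -> Ck U m f -> Ck W m f.
Proof.
move=> WU; elim: m f => [|m IH] f /=; first by move=> cf x Wx; apply: cf; apply: WU.
move=> [cf [df pf]]; split; [|split].
- by move=> x Wx; apply: cf; apply: WU.
- by move=> i x Wx; apply: df; apply: WU.
- by move=> i; apply: IH.
Qed.

Lemma Ck_subr W m (f g : pt -> R) : open W -> Ck W m f -> Ck W m g ->
  Ck W m (fun x => f x - g x).
Proof.
move=> oW Cf Cg.
apply: Ck_ext oW _ (Ck_add oW Cf (Ck_mul oW (Ck_cst W m (-1)) Cg)).
by move=> x _; rewrite mulN1r.
Qed.

Lemma smooth_Dcov W A (e : secE R n k) : open W -> smooth_conn W A ->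
  smoothE W e -> smooth1 W (Dcov A e).
Proof.
move=> oW sA se a al m; rewrite /Dcov.
apply: (Ck_add oW (Ck_partial _ (se al m.+1))).

apply: (@Ck_sum _ _ W m k (fun be x => A a al be x * e be x) oW) => be.
exact: Ck_mul oW (sA a al be m) (se be m).
Qed.

Lemma Dwedge_loc A (p q : sec1 R n k) V y a b al : open V -> V y ->
  (forall a al z, V z -> p a al z = q a al z) ->
  Dwedge A p a b al y = Dwedge A q a b al y.
Proof.
move=> oV Vy pq; rewrite /Dwedge /partial.
have E c be : derive (p c be) y = derive (q c be) y.
  by apply/funext => v; apply: near_eq_derive; near=> z; apply: pq; near: z;
     apply: open_near.
rewrite !E; congr (_ * (_ + _)); last first.
  by apply: eq_bigr => be _; rewrite !pq.
Unshelve. all: by end_near. Qed.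

Lemma Dwedge_sub A (p q : sec1 R n k) x a b al :
  (forall c be d, derivable (p c be) x (evec R d)) ->
  (forall c be d, derivable (q c be) x (evec R d)) ->
  Dwedge A (fun c be y => p c be y - q c be y) a b al x
    = Dwedge A p a b al x - Dwedge A q a b al x.
Proof.
move=> dp dq; rewrite /Dwedge /partial.
have E c be : (fun y => p c be y - q c be y) = p c be - q c be by [].
rewrite !E !deriveB //.
have S : \sum_(be < k) (A a al be x * (p b be x - q b be x)
           - A b al be x * (p a be x - q a be x))
   = \sum_(be < k) (A a al be x * p b be x - A b al be x * p a be x)
   - \sum_(be < k) (A a al be x * q b be x - A b al be x * q a be x).
  by rewrite -sumrB; apply: eq_bigr => ? _; ring.
rewrite S; ring.
Qed.

Lemma Dcov_add A (e1 e2 : secE R n k) a al y :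
  derivable (e1 al) y (evec R a) -> derivable (e2 al) y (evec R a) ->
  Dcov A (fun be z => e1 be z + e2 be z) a al y
    = Dcov A e1 a al y + Dcov A e2 a al y.
Proof.
move=> d1 d2; rewrite /Dcov /partial.
have -> : (fun z => e1 al z + e2 al z) = e1 al + e2 al by [].
rewrite deriveD //.
have S : \sum_(be < k) A a al be y * (e1 be y + e2 be y)
   = \sum_(be < k) A a al be y * e1 be y + \sum_(be < k) A a al be y * e2 be y.
  by rewrite -big_split; apply: eq_bigr => ? _; rewrite mulrDr.
rewrite S; ring.
Qed.

End S2.

Unset Implicit Arguments.

Theorem proposition2p4 (R : realType) (n k : nat) (U : set 'rV[R]_n)
  (A : connection R n k) :
  open U -> smooth_conn U A -> const_rank_curv U A ->
  (exact_conn U A <-> complex_exact U A) /\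
  (Dwedge_injective U A -> exact_conn U A) /\
  (exact_conn U A -> kappa_injective U A -> Dwedge_injective U A).
Proof.
move=> oU sA _.
have sAW' W : W `<=` U -> smooth_conn W A.
  by move=> WU a al be m; apply: Ck_sub WU (sA a al be m).
have DD W (e : secE R n k) : open W -> W `<=` U -> smoothE W e ->
    forall a b al x, W x -> Dwedge A (Dcov A e) a b al x = kappa A e a b al x.
  move=> oW WU se a b al x Wx; apply: (@DwD R n k A e W x a b al oW Wx).
    by move=> a' al' be; apply: (sAW' W WU).
  by move=> al'; apply: se.
have Q W (p : sec1 R n k) (ps : secE R n k) : open W -> W `<=` U ->
   smooth1 W p -> smoothE W ps ->
   (forall a b al x, W x -> Dwedge A p a b al x = kappa A ps a b al x) ->
   smooth1 W (fun a al x => p a al x - Dcov A ps a al x) /\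
   forall a b al x, W x ->
     Dwedge A (fun a al x => p a al x - Dcov A ps a al x) a b al x = 0.
  move=> oW WU sp sps H; split.
    move=> a al m.
    exact: (Ck_subr oW (sp a al m) (smooth_Dcov oW (sAW' W WU) sps a al m)).
  move=> a b al x Wx; rewrite Dwedge_sub.
  - by rewrite H // (DD W ps oW WU sps a b al x Wx) subrr.
  - by move=> c be d; have [_ [dd _]] := sp c be 1%N; apply: dd.
  - move=> c be d.
    by have [_ [dd _]] := smooth_Dcov oW (sAW' W WU) sps c be 1%N; apply: dd.
have k0 a b al x : kappa A (fun _ _ => 0) a b al x = 0.
  by rewrite /kappa big1 // => ? _; rewrite mulr0.
have EX : exact_conn U A -> forall W, open W -> W `<=` U ->
    forall p : sec1 R n k, smooth1 W p ->
    (forall a b al x, W x -> Dwedge A p a b al x = 0) ->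
    forall x, W x -> exists V : set 'rV[R]_n, [/\ open V, V x, V `<=` W &
      exists e : secE R n k, [/\ smoothE V e,
        (forall a b al y, V y -> kappa A e a b al y = 0) &
        forall a al y, V y -> p a al y = Dcov A e a al y]].
  move=> ex W oW WU p sp Hp x Wx.
  have [V [oV Vx VW [e [se pe]]]] := ex W oW WU p (fun _ _ => 0) sp
    (fun al m => Ck_cst W m 0)
    (fun a b al y Wy => etrans (Hp a b al y Wy) (esym (k0 a b al y))) x Wx.
  have VU : V `<=` U by move=> z Vz; apply: WU; apply: VW.
  exists V; split => //; exists e; split => //.
  move=> a b al y Vy; rewrite -(DD V e oV VU se a b al y Vy).
  rewrite -(@Dwedge_loc R n k A p (Dcov A e) V y a b al oV Vy pe).
  by apply: Hp; apply: VW.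
split; [split|split].
- move=> ex W oW WU p sp Hp x Wx.
  exact: (EX ex W oW WU p sp Hp x Wx).
- move=> ce W oW WU p ps sp sps H x Wx.
  have [sq Hq] := Q W p ps oW WU sp sps H.
  have [V [oV Vx VW [e0 [se0 _ qe]]]] := ce W oW WU _ sq Hq x Wx.
  exists V; split => //; exists (fun be z => ps be z + e0 be z); split.
    by move=> al m; apply: (Ck_add oV (Ck_sub VW (sps al m)) (se0 al m)).
  move=> a al y Vy; rewrite Dcov_add.
  - have := qe a al y Vy; move/eqP; rewrite subr_eq => /eqP ->.
    by rewrite addrC.
  - by have [_ [dd _]] := sps al 1%N; apply: dd; apply: VW.
  - by have [_ [dd _]] := se0 al 1%N; apply: dd.
- move=> inj W oW WU p ps sp sps H x Wx.
  have [sq Hq] := Q W p ps oW WU sp sps H.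
  have q0 := inj W oW WU _ sq Hq.
  exists W; split => //; exists ps; split => // a al y Wy.
  by apply/eqP; rewrite -subr_eq0; apply/eqP; apply: q0.
- move=> ex kin W oW WU p sp Hp a al x Wx.
  have [V [oV Vx VW [e [se ke0 pe]]]] := EX ex W oW WU p sp Hp x Wx.
  have VU : V `<=` U by move=> z Vz; apply: WU; apply: VW.
  have ke be y : V y -> e be y = 0.
    move=> Vy; apply: (kin y (VU y Vy) (fun be => e be y)) => a' b' al'.
    exact: (ke0 a' b' al' y Vy).
  rewrite pe // /Dcov big1 ?addr0; last by move=> be _; rewrite ke // mulr0.
  rewrite /partial (@near_eq_derive _ _ _ (e al) (cst 0) x (evec R a)).
    exact: derive_cst.
  near=> z; apply: ke; near: z; exact: open_near.
Unshelve. all: by end_near. Qed.
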